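(* Let $M=I\times_{\phi^{p_1}}F_1\times_{\phi^{p_2}}F_2\times_{\phi^{p_3}}F_3$ be a generalized Kasner spacetime with $\dim F_1=\dim F_2=\dim F_3=1$ and $P=\partial/\partial t$. Then the scalar curvature $\overline S$ of $(M,\overline\nabla)$ is constant if and only if one of the following holds: (1) $\zeta=\eta=0$ and $\overline S=3$; (2) $\zeta=0$, $\eta\neq0$, and: $\overline S>3$ is impossible; if $\overline S=3$ then $\phi$ is constant; if $\overline S<3$ then $\phi(t)=c_0e^{\pm\sqrt{-(\overline S-3)/\eta}\,t}$ for a constant $c_0>0$; (3) $\zeta\neq0$, and with $\triangle=\frac94-\frac{(\overline S-3)(\eta+\zeta^2)}{\zeta^2}$ and real constants $c_1,c_2$ making the base positive on $I$: (3a) if $\overline S<\frac{9\zeta^2}{4(\eta+\zeta^2)}+3$: $\phi=\Big(c_1e^{\frac{\frac32+\sqrt\triangle}{2}t}+c_2e^{\frac{\frac32-\sqrt\triangle}{2}t}\Big)^{\frac{2\zeta}{\eta+\zeta^2}}$; (3b) if $\overline S=\frac{9\zeta^2}{4(\eta+\zeta^2)}+3$: $\phi=\big(c_1e^{\frac34t}+c_2te^{\frac34t}\big)^{\frac{2\zeta}{\eta+\zeta^2}}$; (3c) if $\overline S>\frac{9\zeta^2}{4(\eta+\zeta^2)}+3$: $\phi=\Big(c_1e^{\frac34t}\cos\big(\frac{\sqrt{-\triangle}}2t\big)+c_2e^{\frac34t}\sin\big(\frac{\sqrt{-\triangle}}2t\big)\Big)^{\frac{2\zeta}{\eta+\ze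ta^2}}$.
   Context: A generalized Kasner spacetime is $M=I\times F_1\times\cdots\times F_m$, $I=(t_1,t_2)$, Riemannian $(F_i,g_{F_i})$, $l_i=\dim F_i$, metric $g=-dt^2\oplus\phi^{2p_1}g_{F_1}\oplus\cdots\oplus\phi^{2p_m}g_{F_m}$ with $\phi:I\to(0,\infty)$ smooth, $p_i\in\mathbb R$; $\zeta=\sum_il_ip_i$, $\eta=\sum_il_ip_i^2$. $\nabla$ Levi-Civita of $g$, $\pi(X)=g(X,P)$, $\overline\nabla_XY=\nabla_XY+\pi(Y)X$. Curvature $R(X,Y)Z=\nabla_X\nabla_YZ-\nabla_Y\nabla_XZ-\nabla_{[X,Y]}Z$; Ricci $\mathrm{Ric}(X,Y)=\sum_k\varepsilon_kg(R(X,E_k)Y,E_k)$; scalar curvature $S=\sum_k\varepsilon_k\mathrm{Ric}(E_k,E_k)$ over local orthonormal frames, $\varepsilon_k=g(E_k,E_k)$. *)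

(* Defs.v *)
From Stdlib Require Import Reals ClassicalEpsilon.
Open Scope R_scope.

(* The derivative of f at t (meaningful where f is differentiable). *)
Definition Dt (f : R -> R) (t : R) : R :=
  epsilon (inhabits 0) (fun l => derivable_pt_lim f t l).

Fixpoint Dtn (n : nat) (f : R -> R) : R -> R :=
  match n with O => f | S m => Dt (Dtn m f) end.

Definition smooth_on (t1 t2 : R) (f : R -> R) : Prop :=
  forall (n : nat) (t : R), t1 < t < t2 ->
    exists l, derivable_pt_lim (Dtn n f) t l.

(* ---------- coordinate computation on M = I x F1 x F2 x F3 ----------
   Coordinates (x0,x1,x2,x3) = (t, s1, s2, s3), s_i an arc-length coordinate
   on the 1-dimensional Riemannian manifold F_i (so g_{F_i} = ds_i^2 locally).
   All metric data depend on t only. *)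

Definition sum4 (f : nat -> R) : R := f 0%nat + f 1%nat + f 2%nat + f 3%nat.

Definition kdelta (i j : nat) : R := if Nat.eqb i j then 1 else 0.

Definition expo (p1 p2 p3 : R) (i : nat) : R :=
  match i with 1%nat => p1 | 2%nat => p2 | _ => p3 end.

Definition gK (p1 p2 p3 : R) (phi : R -> R) (i j : nat) (t : R) : R :=
  if Nat.eqb i j then
    (if Nat.eqb i 0 then -1 else Rpower (phi t) (2 * expo p1 p2 p3 i))
  else 0.

(* inverse metric (the metric is diagonal) *)
Definition gKinv (p1 p2 p3 : R) (phi : R -> R) (i j : nat) (t : R) : R :=
  if Nat.eqb i j then / gK p1 p2 p3 phi i i t else 0.

(* partial derivative along coordinate k of a quantity depending on t only *)
Definition dcoord (k : nat) (f : R -> R) (t : R) : R :=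
  if Nat.eqb k 0 then Dt f t else 0.

(* Levi-Civita Christoffel symbols: nabla_{d_i} d_j = sum_k LC k i j d_k *)
Definition LC (p1 p2 p3 : R) (phi : R -> R) (k i j : nat) (t : R) : R :=
  sum4 (fun l => / 2 * gKinv p1 p2 p3 phi k l t *
    (dcoord i (gK p1 p2 p3 phi j l) t + dcoord j (gK p1 p2 p3 phi i l) t
     - dcoord l (gK p1 p2 p3 phi i j) t)).

(* pi(d_j) = g(d_j, P) with P = d/dt *)
Definition piP (p1 p2 p3 : R) (phi : R -> R) (j : nat) (t : R) : R :=
  gK p1 p2 p3 phi j 0%nat t.

(* connection nablabar_X Y = nabla_X Y + pi(Y) X:
   nablabar_{d_i} d_j = sum_k Conn k i j d_k *)
Definition Conn (p1 p2 p3 : R) (phi : R -> R) (k i j : nat) (t : R) : R :=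
  LC p1 p2 p3 phi k i j t + piP p1 p2 p3 phi j t * kdelta k i.

(* Rbar(d_i,d_j) d_k = sum_l Curv l k i j d_l, with
   R(X,Y)Z = nabla_X nabla_Y Z - nabla_Y nabla_X Z - nabla_[X,Y] Z *)
Definition Curv (p1 p2 p3 : R) (phi : R -> R) (l k i j : nat) (t : R) : R :=
  dcoord i (fun s => Conn p1 p2 p3 phi l j k s) t
  - dcoord j (fun s => Conn p1 p2 p3 phi l i k s) t
  + sum4 (fun m => Conn p1 p2 p3 phi m j k t * Conn p1 p2 p3 phi l i m t
                   - Conn p1 p2 p3 phi m i k t * Conn p1 p2 p3 phi l j m t).

(* Ric(X,Y) = sum_k eps_k g(R(X,E_k)Y,E_k) = trace (Z |-> R(X,Z)Y) *)
Definition RicBar (p1 p2 p3 : R) (phi : R -> R) (i j : nat) (t : R) : R :=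
  sum4 (fun a => Curv p1 p2 p3 phi a j i a t).

Definition ScalBar (p1 p2 p3 : R) (phi : R -> R) (t : R) : R :=
  sum4 (fun i => sum4 (fun j => gKinv p1 p2 p3 phi i j t * RicBar p1 p2 p3 phi i j t)).

(* zeta = sum l_i p_i, eta = sum l_i p_i^2 with l_i = 1 *)
Definition kzeta (p1 p2 p3 : R) : R := p1 + p2 + p3.
Definition keta (p1 p2 p3 : R) : R := p1 ^ 2 + p2 ^ 2 + p3 ^ 2.

(* Main.v *)
Require Import Defs.
From Stdlib Require Import Reals Lra Lia ClassicalEpsilon FunctionalExtensionality.
From Coquelicot Require Import Coquelicot.
Open Scope R_scope.

Lemma Dt_eq f t l : derivable_pt_lim f t l -> Dt f t = l.
Proof.
  intros H. unfold Dt. apply (uniqueness_limite f t); [|exact H].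
  apply epsilon_spec. exists l; exact H.
Qed.

Lemma dpl_loc (t1 t2 : R) f g t l :
  (forall s, t1 < s < t2 -> f s = g s) -> t1 < t < t2 ->
  derivable_pt_lim g t l -> derivable_pt_lim f t l.
Proof.
  intros Hfg Ht Hg eps Heps.
  destruct (Hg eps Heps) as [d Hd].
  assert (Hm : 0 < Rmin d (Rmin (t - t1) (t2 - t))).
  { apply Rmin_pos; [apply cond_pos|apply Rmin_pos; lra]. }
  exists (mkposreal _ Hm). intros h Hh0 Hh. simpl in Hh.
  assert (H1 := Rmin_l d (Rmin (t - t1) (t2 - t))).
  assert (H2 := Rmin_r d (Rmin (t - t1) (t2 - t))).
  assert (H3 := Rmin_l (t - t1) (t2 - t)).
  assert (H4 := Rmin_r (t - t1) (t2 - t)).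
  assert (Habs := Rabs_def2 h _ Hh).
  rewrite (Hfg (t + h)) by lra. rewrite (Hfg t) by lra.
  apply Hd; auto. lra.
Qed.

Lemma Dt_loc (t1 t2 : R) f g t l :
  (forall s, t1 < s < t2 -> f s = g s) -> t1 < t < t2 ->
  derivable_pt_lim g t l -> Dt f t = l.
Proof. intros; apply Dt_eq; eapply dpl_loc; eauto. Qed.

Lemma Dt_const c t : Dt (fun _ => c) t = 0.
Proof. apply Dt_eq. apply derivable_pt_lim_const. Qed.

Lemma Rpw_pos x y : 0 < Rpower x y.
Proof. unfold Rpower. apply exp_pos. Qed.

Lemma dpl_Rpower_comp f x l q : 0 < f x -> derivable_pt_lim f x l ->
  derivable_pt_lim (fun s => Rpower (f s) q) x (q * (l / f x) * Rpower (f x) q).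
Proof.
  intros Hp Hd.
  assert (H := derivable_pt_lim_comp f (fun y => Rpower y q) x l _ Hd
                 (derivable_pt_lim_power (f x) q Hp)).
  unfold comp in H.
  replace (q * (l / f x) * Rpower (f x) q) with (q * Rpower (f x) (q - 1) * l); auto.
  unfold Rminus. rewrite Rpower_plus, Rpower_Ropp, Rpower_1 by auto.
  field. lra.
Qed.

Lemma zero_deriv_const (t1 t2 : R) f :
  (forall s, t1 < s < t2 -> derivable_pt_lim f s 0) ->
  forall x y, t1 < x < t2 -> t1 < y < t2 -> f x = f y.
Proof.
  intros H.
  assert (K : forall x y, t1 < x < t2 -> t1 < y < t2 -> x < y -> f x = f y).
  { intros x y Hx Hy Hxy.
    destruct (MVT_cor2 f (fun _ => 0) x y Hxy) as [c [Hc _]].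
    { intros c Hc. apply H. lra. }
    lra. }
  intros x y Hx Hy. destruct (Rtotal_order x y) as [h|[h|h]].
  - auto.
  - subst; auto.
  - symmetry; auto.
Qed.


Definition CC (p1 p2 p3 : R) (phi : R -> R) (k i j : nat) (s : R) : R :=
  let u := Dt phi s / phi s in
  match k, i, j with
  | 0%nat, 0%nat, 0%nat => -1
  | 0%nat, 1%nat, 1%nat => p1 * u * Rpower (phi s) (2 * p1)
  | 0%nat, 2%nat, 2%nat => p2 * u * Rpower (phi s) (2 * p2)
  | 0%nat, 3%nat, 3%nat => p3 * u * Rpower (phi s) (2 * p3)
  | 1%nat, 0%nat, 1%nat => p1 * u
  | 1%nat, 1%nat, 0%nat => p1 * u - 1
  | 2%nat, 0%nat, 2%nat => p2 * u
  | 2%nat, 2%nat, 0%nat => p2 * u - 1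
  | 3%nat, 0%nat, 3%nat => p3 * u
  | 3%nat, 3%nat, 0%nat => p3 * u - 1
  | _, _, _ => 0
  end.

Lemma Dt_G (t1 t2 : R) phi q s :
  (forall t, t1 < t < t2 -> 0 < phi t) ->
  (forall t, t1 < t < t2 -> derivable_pt_lim phi t (Dt phi t)) ->
  t1 < s < t2 ->
  Dt (fun t => Rpower (phi t) q) s = q * (Dt phi s / phi s) * Rpower (phi s) q.
Proof.
  intros Hp Hd Hs. apply Dt_eq. apply dpl_Rpower_comp; auto.
Qed.

Lemma Conn_eq (t1 t2 p1 p2 p3 : R) phi s (k i j : nat) :
  (forall t, t1 < t < t2 -> 0 < phi t) ->
  (forall t, t1 < t < t2 -> derivable_pt_lim phi t (Dt phi t)) ->
  t1 < s < t2 -> (k < 4)%nat -> (i < 4)%nat -> (j < 4)%nat ->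
  Conn p1 p2 p3 phi k i j s = CC p1 p2 p3 phi k i j s.
Proof.
  intros Hp Hd Hs Hk Hi Hj.
  assert (P0 := Hp s Hs).
  assert (R1 := Rpw_pos (phi s) (2*p1)).
  assert (R2 := Rpw_pos (phi s) (2*p2)).
  assert (R3 := Rpw_pos (phi s) (2*p3)).
  destruct k as [|[|[|[|k]]]]; try lia;
  destruct i as [|[|[|[|i]]]]; try lia;
  destruct j as [|[|[|[|j]]]]; try lia;
  cbv beta iota zeta delta [Conn LC piP kdelta gKinv gK sum4 dcoord expo CC Nat.eqb];
  rewrite ?Dt_const, ?(Dt_G t1 t2 phi _ s Hp Hd Hs); field; lra.
Qed.


Definition Up (phi : R -> R) (t : R) : R :=
  (Dt (Dt phi) t * phi t - Dt phi t * Dt phi t) / (phi t * phi t).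

Definition DCC (p1 p2 p3 : R) (phi : R -> R) (k i j : nat) (t : R) : R :=
  let u := Dt phi t / phi t in
  let U := Up phi t in
  match k, i, j with
  | 0%nat, 1%nat, 1%nat => p1 * (U * Rpower (phi t) (2*p1) + u * (2*p1*u*Rpower (phi t) (2*p1)))
  | 0%nat, 2%nat, 2%nat => p2 * (U * Rpower (phi t) (2*p2) + u * (2*p2*u*Rpower (phi t) (2*p2)))
  | 0%nat, 3%nat, 3%nat => p3 * (U * Rpower (phi t) (2*p3) + u * (2*p3*u*Rpower (phi t) (2*p3)))
  | 1%nat, 0%nat, 1%nat => p1 * U
  | 1%nat, 1%nat, 0%nat => p1 * U
  | 2%nat, 0%nat, 2%nat => p2 * U
  | 2%nat, 2%nat, 0%nat => p2 * U
  | 3%nat, 0%nat, 3%nat => p3 * U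
  | 3%nat, 3%nat, 0%nat => p3 * U
  | _, _, _ => 0
  end.

Lemma dpl_u phi t : 0 < phi t -> derivable_pt_lim phi t (Dt phi t) ->
  derivable_pt_lim (Dt phi) t (Dt (Dt phi) t) ->
  derivable_pt_lim (fun s => Dt phi s / phi s) t (Up phi t).
Proof.
  intros Hp H1 H2.
  assert (H := derivable_pt_lim_div _ _ t _ _ H2 H1 ltac:(lra)).
  unfold Up. unfold Rsqr in H. exact H.
Qed.

Lemma dpl_cu phi t c d : 0 < phi t -> derivable_pt_lim phi t (Dt phi t) ->
  derivable_pt_lim (Dt phi) t (Dt (Dt phi) t) ->
  derivable_pt_lim (fun s => c * (Dt phi s / phi s) - d) t (c * Up phi t).
Proof.
  intros Hp H1 H2.
  assert (H := derivable_pt_lim_minus _ _ t _ _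
    (derivable_pt_lim_scal _ c t _ (dpl_u phi t Hp H1 H2)) (derivable_pt_lim_const d t)).
  replace (c * Up phi t) with (c * Up phi t - 0) by ring. exact H.
Qed.

Lemma dpl_cuG phi t c q : 0 < phi t -> derivable_pt_lim phi t (Dt phi t) ->
  derivable_pt_lim (Dt phi) t (Dt (Dt phi) t) ->
  derivable_pt_lim (fun s => c * (Dt phi s / phi s) * Rpower (phi s) q) t
   (c * (Up phi t * Rpower (phi t) q + (Dt phi t / phi t) * (q * (Dt phi t / phi t) * Rpower (phi t) q))).
Proof.
  intros Hp H1 H2.
  assert (H := derivable_pt_lim_mult _ _ t _ _
    (derivable_pt_lim_scal _ c t _ (dpl_u phi t Hp H1 H2)) (dpl_Rpower_comp phi t _ q Hp H1)).
  replace (c * (Up phi t * Rpower (phi t) q + (Dt phi t / phi t) * (q * (Dt phi t / phi t) * Rpower (phi t) q)))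
    with (c * Up phi t * Rpower (phi t) q + c * (Dt phi t / phi t) * (q * (Dt phi t / phi t) * Rpower (phi t) q)) by ring.
  exact H.
Qed.

Lemma dpl_cu0 phi t c : 0 < phi t -> derivable_pt_lim phi t (Dt phi t) ->
  derivable_pt_lim (Dt phi) t (Dt (Dt phi) t) ->
  derivable_pt_lim (fun s => c * (Dt phi s / phi s)) t (c * Up phi t).
Proof.
  intros Hp H1 H2. exact (derivable_pt_lim_scal _ c t _ (dpl_u phi t Hp H1 H2)).
Qed.

Lemma DConn (t1 t2 p1 p2 p3 : R) phi t (k i j : nat) :
  (forall t, t1 < t < t2 -> 0 < phi t) ->
  (forall t, t1 < t < t2 -> derivable_pt_lim phi t (Dt phi t)) ->
  (forall t, t1 < t < t2 -> derivable_pt_lim (Dt phi) t (Dt (Dt phi) t)) ->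
  t1 < t < t2 -> (k < 4)%nat -> (i < 4)%nat -> (j < 4)%nat ->
  Dt (fun s => Conn p1 p2 p3 phi k i j s) t = DCC p1 p2 p3 phi k i j t.
Proof.
  intros Hp Hd Hd2 Ht Hk Hi Hj.
  apply (Dt_loc t1 t2 _ (fun s => CC p1 p2 p3 phi k i j s)); auto.
  { intros s Hs. apply (Conn_eq t1 t2); auto. }
  assert (P0 := Hp t Ht). assert (D1 := Hd t Ht). assert (D2 := Hd2 t Ht).
  destruct k as [|[|[|[|k]]]]; try lia;
  destruct i as [|[|[|[|i]]]]; try lia;
  destruct j as [|[|[|[|j]]]]; try lia;
  cbv beta iota zeta delta [CC DCC];
  first [ apply derivable_pt_lim_const
        | apply (dpl_cuG phi t _ _ P0 D1 D2)
        | apply (dpl_cu phi t _ 1 P0 D1 D2)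
        | apply (dpl_cu0 phi t _ P0 D1 D2) ].
Qed.


Lemma Scal_eq (t1 t2 p1 p2 p3 : R) phi t :
  (forall t, t1 < t < t2 -> 0 < phi t) ->
  (forall t, t1 < t < t2 -> derivable_pt_lim phi t (Dt phi t)) ->
  (forall t, t1 < t < t2 -> derivable_pt_lim (Dt phi) t (Dt (Dt phi) t)) ->
  t1 < t < t2 ->
  ScalBar p1 p2 p3 phi t =
    - 2 * kzeta p1 p2 p3 * Up phi t
    - (keta p1 p2 p3 + kzeta p1 p2 p3 ^ 2) * (Dt phi t / phi t) ^ 2
    + 3 * kzeta p1 p2 p3 * (Dt phi t / phi t) + 3.
Proof.
  intros Hp Hd Hd2 Ht.
  assert (P0 := Hp t Ht).
  assert (R1 := Rpw_pos (phi t) (2*p1)).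
  assert (R2 := Rpw_pos (phi t) (2*p2)).
  assert (R3 := Rpw_pos (phi t) (2*p3)).
  cbv beta iota zeta delta [ScalBar RicBar Curv sum4 dcoord gKinv gK Nat.eqb expo].
  rewrite !(DConn t1 t2 p1 p2 p3 phi t _ _ _ Hp Hd Hd2 Ht) by lia.
  rewrite !(Conn_eq t1 t2 p1 p2 p3 phi t _ _ _ Hp Hd Ht) by lia.
  cbv beta iota zeta delta [CC DCC kzeta keta].
  unfold Up. field. lra.
Qed.


Lemma dD f s l : derivable_pt_lim f s l -> Derive (fun x => f x) s = l.
Proof. intros H. apply is_derive_unique. apply is_derive_Reals. exact H. Qed.

Lemma eD f s l : derivable_pt_lim f s l -> ex_derive (fun x => f x) s.
Proof. intros H. exists l. apply is_derive_Reals. exact H. Qed.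

Lemma const_on (t1 t2 : R) f : t1 < t2 ->
  (forall s, t1 < s < t2 -> derivable_pt_lim f s 0) ->
  exists K, forall s, t1 < s < t2 -> f s = K.
Proof.
  intros Ht H. exists (f ((t1+t2)/2)). intros s Hs.
  apply (zero_deriv_const t1 t2 f H); auto; lra.
Qed.

Lemma exp_sol (t1 t2 r : R) v v1 : t1 < t2 ->
  (forall s, t1 < s < t2 -> derivable_pt_lim v s (v1 s)) ->
  (forall s, t1 < s < t2 -> v1 s = r * v s) ->
  exists A, forall s, t1 < s < t2 -> v s = A * exp (r * s).
Proof.
  intros Ht Hd He.
  destruct (const_on t1 t2 (fun x => v x * exp (- r * x)) Ht) as [K HK].
  { intros s Hs. apply is_derive_Reals. auto_derive.
    - apply (eD _ _ _ (Hd s Hs)).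
    - rewrite (dD _ _ _ (Hd s Hs)), He by auto. ring. }
  exists K. intros s Hs. rewrite <- (HK s Hs).
  rewrite Rmult_assoc, <- exp_plus. replace (- r * s + r * s) with 0 by ring.
  rewrite exp_0. ring.
Qed.

Lemma ODE_real (t1 t2 b be r1 r2 : R) w w1 w2 : t1 < t2 ->
  (forall s, t1 < s < t2 -> derivable_pt_lim w s (w1 s)) ->
  (forall s, t1 < s < t2 -> derivable_pt_lim w1 s (w2 s)) ->
  (forall s, t1 < s < t2 -> w2 s = b * w1 s - be * w s) ->
  r1 <> r2 -> r1 + r2 = b -> r1 * r2 = be ->
  exists c1 c2, forall s, t1 < s < t2 -> w s = c1 * exp (r1 * s) + c2 * exp (r2 * s).
Proof.
  intros Ht H1 H2 He Hr Hb Hbe.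
  destruct (exp_sol t1 t2 r1 (fun x => w1 x - r2 * w x) (fun x => w2 x - r2 * w1 x) Ht) as [A HA].
  { intros s Hs. apply derivable_pt_lim_minus; auto. apply derivable_pt_lim_scal; auto. }
  { intros s Hs. rewrite He by auto. rewrite <- Hb, <- Hbe. ring. }
  destruct (exp_sol t1 t2 r2 (fun x => w1 x - r1 * w x) (fun x => w2 x - r1 * w1 x) Ht) as [B HB].
  { intros s Hs. apply derivable_pt_lim_minus; auto. apply derivable_pt_lim_scal; auto. }
  { intros s Hs. rewrite He by auto. rewrite <- Hb, <- Hbe. ring. }
  exists (A / (r1 - r2)), (- B / (r1 - r2)). intros s Hs.
  specialize (HA s Hs). specialize (HB s Hs). simpl in HA, HB.
  apply (Rmult_eq_reg_l (r1 - r2)); [|lra].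
  field_simplify; [|lra]. nra.
Qed.

Lemma ODE_double (t1 t2 b be r : R) w w1 w2 : t1 < t2 ->
  (forall s, t1 < s < t2 -> derivable_pt_lim w s (w1 s)) ->
  (forall s, t1 < s < t2 -> derivable_pt_lim w1 s (w2 s)) ->
  (forall s, t1 < s < t2 -> w2 s = b * w1 s - be * w s) ->
  2 * r = b -> r * r = be ->
  exists c1 c2, forall s, t1 < s < t2 -> w s = c1 * exp (r * s) + c2 * s * exp (r * s).
Proof.
  intros Ht H1 H2 He Hb Hbe.
  destruct (exp_sol t1 t2 r (fun x => w1 x - r * w x) (fun x => w2 x - r * w1 x) Ht) as [A HA].
  { intros s Hs. apply derivable_pt_lim_minus; auto. apply derivable_pt_lim_scal; auto. }
  { intros s Hs. rewrite He by auto. rewrite <- Hb, <- Hbe. ring. }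
  destruct (const_on t1 t2 (fun x => w x * exp (- r * x) - A * x) Ht) as [B HB].
  { intros s Hs. apply is_derive_Reals. auto_derive.
    - apply (eD _ _ _ (H1 s Hs)).
    - rewrite (dD _ _ _ (H1 s Hs)).
      assert (E : w1 s = A * exp (r * s) + r * w s) by (specialize (HA s Hs); simpl in HA; lra).
      rewrite E.
      assert (Ee : exp (- r * s) = / exp (r * s)).
      { replace (- r * s) with (- (r * s)) by ring. apply exp_Ropp. }
      rewrite Ee. field. apply Rgt_not_eq, exp_pos. }
  exists B, A. intros s Hs. specialize (HB s Hs).
  assert (E : w s = (w s * exp (- r * s)) * exp (r * s)).
  { rewrite Rmult_assoc, <- exp_plus. replace (- r * s + r * s) with 0 by ring.
    rewrite exp_0. ring. }
  rewrite E. replace (w s * exp (- r * s)) with (B + A * s) by lra. ring.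
Qed.

Lemma ODE_complex (t1 t2 b be al ga : R) w w1 w2 : t1 < t2 ->
  (forall s, t1 < s < t2 -> derivable_pt_lim w s (w1 s)) ->
  (forall s, t1 < s < t2 -> derivable_pt_lim w1 s (w2 s)) ->
  (forall s, t1 < s < t2 -> w2 s = b * w1 s - be * w s) ->
  2 * al = b -> al * al + ga * ga = be -> ga <> 0 ->
  exists c1 c2, forall s, t1 < s < t2 ->
    w s = c1 * exp (al * s) * cos (ga * s) + c2 * exp (al * s) * sin (ga * s).
Proof.
  intros Ht H1 H2 He Hb Hbe Hg.
  destruct (const_on t1 t2 (fun x => exp (- al * x) *
     (w x * cos (ga * x) - ((w1 x - al * w x) / ga) * sin (ga * x))) Ht) as [C HC].
  { intros s Hs. apply is_derive_Reals. auto_derive.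
    - repeat split; auto; first [apply (eD _ _ _ (H1 s Hs))|apply (eD _ _ _ (H2 s Hs))].
    - rewrite (dD _ _ _ (H1 s Hs)), (dD _ _ _ (H2 s Hs)), He by auto.
      rewrite <- Hb, <- Hbe. field. auto. }
  destruct (const_on t1 t2 (fun x => exp (- al * x) *
     (w x * sin (ga * x) + ((w1 x - al * w x) / ga) * cos (ga * x))) Ht) as [D HD].
  { intros s Hs. apply is_derive_Reals. auto_derive.
    - repeat split; auto; first [apply (eD _ _ _ (H1 s Hs))|apply (eD _ _ _ (H2 s Hs))].
    - rewrite (dD _ _ _ (H1 s Hs)), (dD _ _ _ (H2 s Hs)), He by auto.
      rewrite <- Hb, <- Hbe. field. auto. }
  exists C, D. intros s Hs. rewrite <- (HC s Hs), <- (HD s Hs).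
  assert (Ee : exp (al * s) * exp (- al * s) = 1).
  { rewrite <- exp_plus. replace (al * s + - al * s) with 0 by ring. apply exp_0. }
  assert (Ecs := sin2_cos2 (ga * s)). unfold Rsqr in Ecs.
  transitivity (w s * (exp (al * s) * exp (- al * s)) * (sin (ga * s) * sin (ga * s) + cos (ga * s) * cos (ga * s))).
  { rewrite Ee, Ecs. ring. }
  field. auto.
Qed.


Lemma back (t1 t2 q : R) phi w w1 w2 :
  (forall t, t1 < t < t2 -> 0 < phi t) ->
  (forall t, t1 < t < t2 -> derivable_pt_lim phi t (Dt phi t)) ->
  (forall t, t1 < t < t2 -> derivable_pt_lim (Dt phi) t (Dt (Dt phi) t)) ->
  (forall s, t1 < s < t2 -> 0 < w s /\ phi s = Rpower (w s) q) ->
  (forall s, t1 < s < t2 -> derivable_pt_lim w s (w1 s)) ->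
  (forall s, t1 < s < t2 -> derivable_pt_lim w1 s (w2 s)) ->
  forall t, t1 < t < t2 ->
    Dt phi t / phi t = q * w1 t / w t /\
    Up phi t = q * (w2 t * w t - w1 t * w1 t) / (w t * w t).
Proof.
  intros Hp Hd Hd2 Hw H1 H2.
  assert (Hu : forall s, t1 < s < t2 -> Dt phi s / phi s = q * w1 s / w s).
  { intros s Hs. destruct (Hw s Hs) as [W0 Ws].
    rewrite (Dt_loc t1 t2 phi (fun x => Rpower (w x) q) s _ (fun x Hx => proj2 (Hw x Hx)) Hs
              (dpl_Rpower_comp w s (w1 s) q W0 (H1 s Hs))).
    rewrite Ws. field. split; first [lra | apply Rgt_not_eq, Rpw_pos]. }
  intros t Ht. split; [auto|].
  destruct (Hw t Ht) as [W0 Ws].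
  apply (uniqueness_limite (fun s => Dt phi s / phi s) t).
  - apply dpl_u; auto.
  - apply (dpl_loc t1 t2 _ (fun s => q * w1 s / w s)); auto.
    apply is_derive_Reals. auto_derive.
    + repeat split; first [apply (eD _ _ _ (H1 t Ht)) | apply (eD _ _ _ (H2 t Ht)) | lra].
    + rewrite (dD _ _ _ (H1 t Ht)), (dD _ _ _ (H2 t Ht)). field. lra.
Qed.

Lemma cand_real c1 c2 r1 r2 s :
  derivable_pt_lim (fun x => c1 * exp (r1 * x) + c2 * exp (r2 * x)) s
    (c1 * r1 * exp (r1 * s) + c2 * r2 * exp (r2 * s)) /\
  derivable_pt_lim (fun x => c1 * r1 * exp (r1 * x) + c2 * r2 * exp (r2 * x)) s
    (c1 * r1 * r1 * exp (r1 * s) + c2 * r2 * r2 * exp (r2 * s)).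
Proof. split; apply is_derive_Reals; auto_derive; auto; ring. Qed.

Lemma cand_double c1 c2 r s :
  derivable_pt_lim (fun x => c1 * exp (r * x) + c2 * x * exp (r * x)) s
    (c2 * exp (r * s) + r * (c1 * exp (r * s) + c2 * s * exp (r * s))) /\
  derivable_pt_lim (fun x => c2 * exp (r * x) + r * (c1 * exp (r * x) + c2 * x * exp (r * x))) s
    (2 * r * c2 * exp (r * s) + r * r * (c1 * exp (r * s) + c2 * s * exp (r * s))).
Proof. split; apply is_derive_Reals; auto_derive; auto; ring. Qed.

Lemma cand_complex c1 c2 al ga s :
  derivable_pt_lim (fun x => c1 * exp (al * x) * cos (ga * x) + c2 * exp (al * x) * sin (ga * x)) s
    (al * (c1 * exp (al * s) * cos (ga * s) + c2 * exp (al * s) * sin (ga * s))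
     + ga * (- c1 * exp (al * s) * sin (ga * s) + c2 * exp (al * s) * cos (ga * s))) /\
  derivable_pt_lim (fun x => al * (c1 * exp (al * x) * cos (ga * x) + c2 * exp (al * x) * sin (ga * x))
     + ga * (- c1 * exp (al * x) * sin (ga * x) + c2 * exp (al * x) * cos (ga * x))) s
    ((al * al - ga * ga) * (c1 * exp (al * s) * cos (ga * s) + c2 * exp (al * s) * sin (ga * s))
     + 2 * al * ga * (- c1 * exp (al * s) * sin (ga * s) + c2 * exp (al * s) * cos (ga * s))).
Proof. split; apply is_derive_Reals; auto_derive; auto; ring. Qed.


Lemma final_alg z a c q u Up W W1 W2 : z <> 0 -> a <> 0 -> W <> 0 -> q = 2 * z / a ->
  u = q * W1 / W -> Up = q * (W2 * W - W1 * W1) / (W * W) ->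
  W2 = 3 / 2 * W1 - (c - 3) * a / (4 * z ^ 2) * W ->
  - 2 * z * Up - a * u ^ 2 + 3 * z * u + 3 = c.
Proof. intros Hz Ha HW Hq Hu HU H2. subst. field. auto. Qed.

Lemma rel_real c1 c2 r1 r2 E1 E2 b be : r1 + r2 = b -> r1 * r2 = be ->
  c1 * r1 * r1 * E1 + c2 * r2 * r2 * E2 = b * (c1 * r1 * E1 + c2 * r2 * E2) - be * (c1 * E1 + c2 * E2).
Proof. intros; subst; ring. Qed.

Lemma rel_double c1 c2 r s E b be : 2 * r = b -> r * r = be ->
  2 * r * c2 * E + r * r * (c1 * E + c2 * s * E) =
  b * (c2 * E + r * (c1 * E + c2 * s * E)) - be * (c1 * E + c2 * s * E).
Proof. intros; subst; ring. Qed.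

Lemma rel_complex W V al ga b be : 2 * al = b -> al * al + ga * ga = be ->
  (al * al - ga * ga) * W + 2 * al * ga * V = b * (al * W + ga * V) - be * W.
Proof. intros; subst; ring. Qed.

Lemma Delta_eq z a c : z <> 0 -> a <> 0 ->
  9 / 4 - (c - 3) * a / z ^ 2 = (9 * z ^ 2 / (4 * a) + 3 - c) * a / z ^ 2.
Proof. intros; field; auto. Qed.


Theorem theorem5p6 (t1 t2 p1 p2 p3 : R) (phi : R -> R)
  (Ht : t1 < t2)
  (Hpos : forall t, t1 < t < t2 -> 0 < phi t)
  (Hsm : smooth_on t1 t2 phi)
  (c : R) :
  (forall t, t1 < t < t2 -> ScalBar p1 p2 p3 phi t = c) <->
  ( (* (1) *)
    (kzeta p1 p2 p3 = 0 /\ keta p1 p2 p3 = 0 /\ c = 3)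
  \/ (* (2) *)
    (kzeta p1 p2 p3 = 0 /\ keta p1 p2 p3 <> 0 /\
     ~ (c > 3) /\
     (c = 3 -> exists k0, forall t, t1 < t < t2 -> phi t = k0) /\
     (c < 3 -> exists c0, 0 < c0 /\ exists s, (s = 1 \/ s = -1) /\
        forall t, t1 < t < t2 ->
          phi t = c0 * exp (s * sqrt (- (c - 3) / keta p1 p2 p3) * t)))
  \/ (* (3) *)
    (kzeta p1 p2 p3 <> 0 /\
     let z := kzeta p1 p2 p3 in
     let a := keta p1 p2 p3 + z ^ 2 in
     let Delta := 9 / 4 - (c - 3) * a / z ^ 2 in
     let T := 9 * z ^ 2 / (4 * a) + 3 in
     (c < T -> exists c1 c2, forall t, t1 < t < t2 ->
        let w := c1 * exp ((3 / 2 + sqrt Delta) / 2 * t)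
               + c2 * exp ((3 / 2 - sqrt Delta) / 2 * t) in
        0 < w /\ phi t = Rpower w (2 * z / a)) /\
     (c = T -> exists c1 c2, forall t, t1 < t < t2 ->
        let w := c1 * exp (3 / 4 * t) + c2 * t * exp (3 / 4 * t) in
        0 < w /\ phi t = Rpower w (2 * z / a)) /\
     (c > T -> exists c1 c2, forall t, t1 < t < t2 ->
        let w := c1 * exp (3 / 4 * t) * cos (sqrt (- Delta) / 2 * t)
               + c2 * exp (3 / 4 * t) * sin (sqrt (- Delta) / 2 * t) in
        0 < w /\ phi t = Rpower w (2 * z / a)))).
Proof.
  assert (Hd : forall t, t1 < t < t2 -> derivable_pt_lim phi t (Dt phi t)).
  { intros s Hs. destruct (Hsm 0%nat s Hs) as [l Hl]. simpl in Hl.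
    rewrite (Dt_eq _ _ _ Hl). exact Hl. }
  assert (Hd2 : forall t, t1 < t < t2 -> derivable_pt_lim (Dt phi) t (Dt (Dt phi) t)).
  { intros s Hs. destruct (Hsm 1%nat s Hs) as [l Hl]. simpl in Hl.
    rewrite (Dt_eq _ _ _ Hl). exact Hl. }
  assert (HS := fun t Ht => Scal_eq t1 t2 p1 p2 p3 phi t Hpos Hd Hd2 Ht).
  assert (He0 : 0 <= keta p1 p2 p3) by (unfold keta; nra).
  cbv zeta.
  set (z := kzeta p1 p2 p3) in *. set (e := keta p1 p2 p3) in *.
  assert (Hm : t1 < (t1+t2)/2 < t2) by lra.
  split.
  -
    intros Hc.
    assert (HF : forall s, t1 < s < t2 -> - 2 * z * Up phi s - (e + z ^ 2) * (Dt phi s / phi s) ^ 2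
              + 3 * z * (Dt phi s / phi s) + 3 = c).
    { intros s Hs. rewrite <- (HS s Hs). auto. }
    destruct (Req_dec z 0) as [Hz|Hz].
    + destruct (Req_dec e 0) as [He|He].
      * left. repeat split; auto. specialize (HF _ Hm). rewrite Hz, He in HF. lra.
      * right; left.
        assert (He1 : 0 < e) by lra.
        assert (HF2 : forall s, t1 < s < t2 -> e * (Dt phi s / phi s) ^ 2 = 3 - c).
        { intros s Hs. specialize (HF s Hs). rewrite Hz in HF. lra. }
        repeat split; auto.
        -- intro Hc3. specialize (HF2 _ Hm).
           assert (0 <= e * (Dt phi ((t1+t2)/2) / phi ((t1+t2)/2)) ^ 2)
             by (apply Rmult_le_pos; [lra| apply pow2_ge_0]). lra.
        -- intros Hc3. exists (phi ((t1+t2)/2)). intros s Hs.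
           apply (zero_deriv_const t1 t2 phi); auto.
           intros x Hx. specialize (HF2 x Hx). assert (P0 := Hpos x Hx).
           assert (Hu0 : Dt phi x / phi x = 0).
           { assert (Hq : (Dt phi x / phi x) * (Dt phi x / phi x) = 0).
             { apply (Rmult_eq_reg_l e); [|lra]. rewrite Rmult_0_r.
               replace (e * (Dt phi x / phi x * (Dt phi x / phi x))) with (e * (Dt phi x / phi x) ^ 2) by ring.
               lra. }
             destruct (Rmult_integral _ _ Hq); auto. }
           assert (Hdx : Dt phi x = 0).
           { replace (Dt phi x) with ((Dt phi x / phi x) * phi x) by (field; lra).
             rewrite Hu0; ring. }
           rewrite <- Hdx. auto.
        -- intros Hc3.
           assert (HUp : forall s, t1 < s < t2 -> Up phi s = 0).
           { intros s Hs. assert (P0 := Hpos s Hs).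
             assert (Du := dpl_u phi s P0 (Hd s Hs) (Hd2 s Hs)).
             assert (D1 := derivable_pt_lim_mult _ _ s _ _ Du Du).
             assert (D3 : derivable_pt_lim (fun x => (Dt phi x / phi x) * (Dt phi x / phi x)) s 0).
             { apply (dpl_loc t1 t2 _ (fun _ => (3 - c) / e)); auto.
               - intros x Hx. specialize (HF2 x Hx). assert (Px := Hpos x Hx).
                 rewrite <- HF2. field. repeat split; lra.
               - apply derivable_pt_lim_const. }
             assert (E := uniqueness_limite _ _ _ _ D1 D3).
             specialize (HF2 s Hs).
             assert (Hne : Dt phi s / phi s <> 0) by (intro H0; rewrite H0 in HF2; nra).
             apply (Rmult_eq_reg_l (2 * (Dt phi s / phi s))); [|intro H0; apply Hne; lra].
             simpl in E. lra. }
           set (u0 := Dt phi ((t1+t2)/2) / phi ((t1+t2)/2)).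
           assert (Hu : forall s, t1 < s < t2 -> Dt phi s / phi s = u0).
           { intros s Hs. apply (zero_deriv_const t1 t2 (fun x => Dt phi x / phi x)); auto.
             intros x Hx. rewrite <- (HUp x Hx). apply dpl_u; auto. }
           destruct (const_on t1 t2 (fun x => phi x * exp (- u0 * x)) Ht) as [K HK].
           { intros s Hs. apply is_derive_Reals. auto_derive.
             - apply (eD _ _ _ (Hd s Hs)).
             - rewrite (dD _ _ _ (Hd s Hs)).
               assert (E := Hu s Hs). assert (P0 := Hpos s Hs).
               replace (Dt phi s) with (u0 * phi s) by (rewrite <- E; field; lra). ring. }
           exists K. split.
           { rewrite <- (HK _ Hm). apply Rmult_lt_0_compat; [apply Hpos; auto|apply exp_pos]. }
           assert (Hk : sqrt (- (c - 3) / e) = Rabs u0).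
           { rewrite <- sqrt_Rsqr_abs. f_equal. unfold Rsqr.
             transitivity ((3 - c) / e); [field; lra|]. rewrite <- (HF2 _ Hm).
             assert (Px := Hpos _ Hm). unfold u0. field. repeat split; lra. }
           assert (Hphi : forall s, t1 < s < t2 -> phi s = K * exp (u0 * s)).
           { intros s Hs. rewrite <- (HK s Hs). rewrite Rmult_assoc, <- exp_plus.
             replace (- u0 * s + u0 * s) with 0 by ring. rewrite exp_0. ring. }
           rewrite Hk. destruct (Rle_dec 0 u0) as [Hs0|Hs0].
           ++ exists 1. split; [left; auto|]. intros s Hs. rewrite Rabs_right by lra.
              rewrite Rmult_1_l. auto.
           ++ exists (-1). split; [right; auto|]. intros s Hs. rewrite Rabs_left by lra.
              replace (-1 * - u0) with u0 by ring. auto.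
    + right; right. split; [exact Hz|].
      set (a := e + z ^ 2) in *.
      assert (Ha : 0 < a) by (unfold a; assert (0 < z ^ 2) by (apply pow2_gt_0; auto); lra).
      assert (Hz2 : 0 < z ^ 2) by (apply pow2_gt_0; auto).
      set (r := a / (2 * z)).
      set (be := (c - 3) * a / (4 * z ^ 2)).
      set (w := fun s => Rpower (phi s) r).
      set (w1 := fun s => r * (Dt phi s / phi s) * Rpower (phi s) r).
      set (w2 := fun s => r * (Up phi s * Rpower (phi s) r + (Dt phi s / phi s) * (r * (Dt phi s / phi s) * Rpower (phi s) r))).
      assert (dW : forall s, t1 < s < t2 -> derivable_pt_lim w s (w1 s)).
      { intros s Hs. apply dpl_Rpower_comp; auto. }
      assert (dW1 : forall s, t1 < s < t2 -> derivable_pt_lim w1 s (w2 s)).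
      { intros s Hs. apply dpl_cuG; auto. }
      assert (HODE : forall s, t1 < s < t2 -> w2 s = 3 / 2 * w1 s - be * w s).
      { intros s Hs. specialize (HF s Hs). assert (Px := Hpos s Hs).
        assert (HU : Up phi s = (3 * z * (Dt phi s / phi s) - a * (Dt phi s / phi s) ^ 2 + 3 - c) / (2 * z)).
        { rewrite <- HF. field. repeat split; lra. }
        unfold w, w1, w2, be, r. rewrite HU. field. repeat split; lra. }
      assert (Hphi : forall s, t1 < s < t2 -> phi s = Rpower (w s) (2 * z / a)).
      { intros s Hs. unfold w. rewrite Rpower_mult.
        replace (r * (2 * z / a)) with 1 by (unfold r; field; split; lra).
        rewrite Rpower_1; auto. }
      assert (Hfin : forall f, (forall s, t1 < s < t2 -> w s = f s) ->
                forall s, t1 < s < t2 -> 0 < f s /\ phi s = Rpower (f s) (2 * z / a)).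
      { intros f Hf s Hs. rewrite <- (Hf s Hs). split; [apply Rpw_pos|auto]. }
      assert (HDe := Delta_eq z a c Hz ltac:(lra)).
      split; [|split].
      * intros HcT.
        assert (HD : 0 < 9 / 4 - (c - 3) * a / z ^ 2).
        { rewrite HDe. apply Rdiv_lt_0_compat; [apply Rmult_lt_0_compat|]; lra. }
        assert (Hsq := sqrt_lt_R0 _ HD). assert (Hsq2 := sqrt_sqrt _ (Rlt_le _ _ HD)).
        destruct (ODE_real t1 t2 (3/2) be ((3 / 2 + sqrt (9 / 4 - (c - 3) * a / z ^ 2)) / 2)
                    ((3 / 2 - sqrt (9 / 4 - (c - 3) * a / z ^ 2)) / 2) w w1 w2 Ht dW dW1 HODE)
          as [c1 [c2 Hw]].
        -- lra.
        -- field.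
        -- transitivity ((9/4 - sqrt (9 / 4 - (c - 3) * a / z ^ 2) * sqrt (9 / 4 - (c - 3) * a / z ^ 2)) / 4); [field|].
           rewrite Hsq2. unfold be. field. auto.
        -- exists c1, c2. apply Hfin. exact Hw.
      * intros HcT.
        destruct (ODE_double t1 t2 (3/2) be (3/4) w w1 w2 Ht dW dW1 HODE) as [c1 [c2 Hw]].
        -- field.
        -- unfold be. rewrite HcT. field. split; lra.
        -- exists c1, c2. apply Hfin. exact Hw.
      * intros HcT.
        assert (HD : 0 < - (9 / 4 - (c - 3) * a / z ^ 2)).
        { rewrite HDe. replace (- ((9 * z ^ 2 / (4 * a) + 3 - c) * a / z ^ 2))
            with ((c - (9 * z ^ 2 / (4 * a) + 3)) * a / z ^ 2) by (field; split; lra).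
          apply Rdiv_lt_0_compat; [apply Rmult_lt_0_compat|]; lra. }
        assert (Hsq := sqrt_lt_R0 _ HD). assert (Hsq2 := sqrt_sqrt _ (Rlt_le _ _ HD)).
        destruct (ODE_complex t1 t2 (3/2) be (3/4) (sqrt (- (9 / 4 - (c - 3) * a / z ^ 2)) / 2)
                    w w1 w2 Ht dW dW1 HODE) as [c1 [c2 Hw]].
        -- field.
        -- transitivity (9/16 + sqrt (- (9 / 4 - (c - 3) * a / z ^ 2)) * sqrt (- (9 / 4 - (c - 3) * a / z ^ 2)) / 4); [field|].
           rewrite Hsq2. unfold be. field. auto.
        -- lra.
        -- exists c1, c2. apply Hfin. exact Hw.
  - intros H t Hti. rewrite (HS t Hti).
    assert (Pt := Hpos t Hti).
    destruct H as [[Hz [He Hc]]|[[Hz [He [Hn [H3 Hlt]]]]|[Hz H]]].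
    + rewrite Hz, He, Hc. ring.
    + rewrite Hz. assert (He1 : 0 < e) by lra.
      destruct (Rtotal_order c 3) as [h|[h|h]].
      * destruct (Hlt h) as [c0 [Hc0 [sg [Hsg Hph]]]].
        set (L := sg * sqrt (- (c - 3) / e)) in *.
        destruct (back t1 t2 1 phi (fun x => c0 * exp (L * x)) (fun x => c0 * L * exp (L * x))
                    (fun x => c0 * L * L * exp (L * x)) Hpos Hd Hd2) with (t := t) as [Hu HU]; auto.
        { intros s Hs. assert (0 < c0 * exp (L * s)) by (apply Rmult_lt_0_compat; [lra|apply exp_pos]).
          split; auto. rewrite Rpower_1; auto. }
        { intros s Hs. apply is_derive_Reals. auto_derive; auto. ring. }
        { intros s Hs. apply is_derive_Reals. auto_derive; auto. ring. }
        assert (E0 : 0 < c0 * exp (L * t)) by (apply Rmult_lt_0_compat; [lra|apply exp_pos]).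
        rewrite Hu, HU.
        assert (HL : L * L = - (c - 3) / e).
        { unfold L. replace (sg * sqrt (- (c - 3) / e) * (sg * sqrt (- (c - 3) / e)))
            with ((sg * sg) * (sqrt (- (c - 3) / e) * sqrt (- (c - 3) / e))) by ring.
          rewrite sqrt_sqrt.
          - destruct Hsg as [-> | ->]; ring.
          - apply Rdiv_le_0_compat; lra. }
        assert (Ex := exp_pos (L * t)).
        transitivity (3 - e * (L * L)); [field; repeat split; lra|]. rewrite HL. field. lra.
      * destruct (H3 h) as [k0 Hk0].
        assert (Hk : 0 < k0) by (rewrite <- (Hk0 _ Hm); apply Hpos; auto).
        destruct (back t1 t2 1 phi (fun _ => k0) (fun _ => 0) (fun _ => 0) Hpos Hd Hd2)
          with (t := t) as [Hu HU]; auto.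
        { intros s Hs. split; auto. rewrite Rpower_1; auto. }
        { intros s Hs. apply derivable_pt_lim_const. }
        { intros s Hs. apply derivable_pt_lim_const. }
        rewrite Hu, HU. rewrite h. field. lra.
      * exfalso. apply Hn. exact h.
    + set (a := e + z ^ 2) in *.
      assert (Hz2 : 0 < z ^ 2) by (apply pow2_gt_0; auto).
      assert (Ha : 0 < a) by (unfold a; lra).
      assert (HDe := Delta_eq z a c Hz ltac:(lra)).
      set (be := (c - 3) * a / (4 * z ^ 2)).
      destruct H as [Hc1 [Hc2 Hc3]].
      assert (Fin : forall W W1 W2, 
         (forall s, t1 < s < t2 -> 0 < W s /\ phi s = Rpower (W s) (2 * z / a)) ->
         (forall s, t1 < s < t2 -> derivable_pt_lim W s (W1 s)) ->
         (forall s, t1 < s < t2 -> derivable_pt_lim W1 s (W2 s)) ->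
         W2 t = 3 / 2 * W1 t - be * W t ->
         - 2 * z * Up phi t - a * (Dt phi t / phi t) ^ 2 + 3 * z * (Dt phi t / phi t) + 3 = c).
      { intros W W1 W2 HW D1 D2 Hrel.
        destruct (back t1 t2 (2 * z / a) phi W W1 W2 Hpos Hd Hd2 HW D1 D2 t Hti) as [Hu HU].
        destruct (HW t Hti) as [W0 _].
        apply (final_alg z a c (2 * z / a) _ _ (W t) (W1 t) (W2 t)); auto; lra. }
      destruct (Rtotal_order c (9 * z ^ 2 / (4 * a) + 3)) as [h|[h|h]].
      * destruct (Hc1 h) as [c1 [c2 Hw]].
        assert (HD : 0 < 9 / 4 - (c - 3) * a / z ^ 2).
        { rewrite HDe. apply Rdiv_lt_0_compat; [apply Rmult_lt_0_compat|]; lra. }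
        assert (Hsq2 := sqrt_sqrt _ (Rlt_le _ _ HD)).
        set (r1 := (3 / 2 + sqrt (9 / 4 - (c - 3) * a / z ^ 2)) / 2) in *.
        set (r2 := (3 / 2 - sqrt (9 / 4 - (c - 3) * a / z ^ 2)) / 2) in *.
        apply (Fin (fun x => c1 * exp (r1 * x) + c2 * exp (r2 * x))
                   (fun x => c1 * r1 * exp (r1 * x) + c2 * r2 * exp (r2 * x))
                   (fun x => c1 * r1 * r1 * exp (r1 * x) + c2 * r2 * r2 * exp (r2 * x))).
        -- exact Hw.
        -- intros s _. apply cand_real.
        -- intros s _. apply cand_real.
        -- apply rel_real.
           ++ unfold r1, r2. field.
           ++ unfold r1, r2. transitivity ((9/4 - sqrt (9 / 4 - (c - 3) * a / z ^ 2) * sqrt (9 / 4 - (c - 3) * a / z ^ 2)) / 4); [field|].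
              rewrite Hsq2. unfold be. field. auto.
      * destruct (Hc2 h) as [c1 [c2 Hw]].
        apply (Fin (fun x => c1 * exp (3 / 4 * x) + c2 * x * exp (3 / 4 * x))
                   (fun x => c2 * exp (3 / 4 * x) + 3 / 4 * (c1 * exp (3 / 4 * x) + c2 * x * exp (3 / 4 * x)))
                   (fun x => 2 * (3 / 4) * c2 * exp (3 / 4 * x) + 3 / 4 * (3 / 4) * (c1 * exp (3 / 4 * x) + c2 * x * exp (3 / 4 * x)))).
        -- exact Hw.
        -- intros s _. apply cand_double.
        -- intros s _. apply cand_double.
        -- apply rel_double.
           ++ field.
           ++ unfold be. rewrite h. field. split; lra.
      * destruct (Hc3 h) as [c1 [c2 Hw]].
        assert (HD : 0 < - (9 / 4 - (c - 3) * a / z ^ 2)).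
        { rewrite HDe. replace (- ((9 * z ^ 2 / (4 * a) + 3 - c) * a / z ^ 2))
            with ((c - (9 * z ^ 2 / (4 * a) + 3)) * a / z ^ 2) by (field; split; lra).
          apply Rdiv_lt_0_compat; [apply Rmult_lt_0_compat|]; lra. }
        assert (Hsq2 := sqrt_sqrt _ (Rlt_le _ _ HD)).
        set (ga := sqrt (- (9 / 4 - (c - 3) * a / z ^ 2)) / 2) in *.
        apply (Fin (fun x => c1 * exp (3 / 4 * x) * cos (ga * x) + c2 * exp (3 / 4 * x) * sin (ga * x))
                   (fun x => 3 / 4 * (c1 * exp (3 / 4 * x) * cos (ga * x) + c2 * exp (3 / 4 * x) * sin (ga * x))
                    + ga * (- c1 * exp (3 / 4 * x) * sin (ga * x) + c2 * exp (3 / 4 * x) * cos (ga * x)))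
                   (fun x => (3 / 4 * (3 / 4) - ga * ga) * (c1 * exp (3 / 4 * x) * cos (ga * x) + c2 * exp (3 / 4 * x) * sin (ga * x))
                    + 2 * (3 / 4) * ga * (- c1 * exp (3 / 4 * x) * sin (ga * x) + c2 * exp (3 / 4 * x) * cos (ga * x)))).
        -- exact Hw.
        -- intros s _. apply cand_complex.
        -- intros s _. apply cand_complex.
        -- apply rel_complex.
           ++ field.
           ++ unfold ga. transitivity (9/16 + sqrt (- (9 / 4 - (c - 3) * a / z ^ 2)) * sqrt (- (9 / 4 - (c - 3) * a / z ^ 2)) / 4); [field|].
              rewrite Hsq2. unfold be. field. auto.
Qed.
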